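(* Let $\mathbf{X}=(X,\mu_X,\mathcal{S}_X)$ and $\mathbf{Y}=(Y,\mu_Y,\mathcal{S}_Y)$ be symmetry measure spaces whose measures take values in a common complete linearly ordered set. Suppose there is a function $f:X\to Y$ such that (i) for every $\mu_Y$-measurable set $B\subset Y$ the preimage $f^{-1}(B)$ is $\mu_X$-measurable and $\mu_X(f^{-1}(B))\le \mu_Y(B)$; (ii) for every $s_X\in\mathcal{S}_X$ there is $s_Y\in\mathcal{S}_Y$ with $s_Y\circ f=f\circ s_X$. Then $\mathrm{ms}_r(\mathbf{X})\le \mathrm{ms}_r(\mathbf{Y})$ for every cardinal $r$.
   Context: A measure on a set $X$ is a monotone function $\mu:\mathrm{dom}(\mu)\to[\mu(\emptyset),\mu(X)]$ defined on a $\sigma$-algebra $\mathrm{dom}(\mu)$ of subsets of $X$ (the measurable sets) with values in a complete linearly ordered set (every subset has an infimum and a supremum); monotone means $\mu(A)\le\mu(B)$ whenever $A\subset B$ are measurable. A symmetry measure space is a triple $(X,\mu,\mathcal{S})$ where $\mathcal{S}$ is a family of bijections $X\to X$ (admissible symmetries) with $s^{-1}\in\mathcal{S}$ for each $s\in\mathcal{S}$, and each $s\in\mathcal{S}$ is measure-preserving: $s(A)$ is measurable and $\mu(s(A))=\mu(A)$ for each measurable $A$. A set $A\subset X$ is $\mathcal{S}$-symmetric if $s(A)=A$ for some $s\in\mathcal{S}$. For measurable $A$, $\mathrm{ms}(A)=\sup\{\mu(B): B\subset A \text{ measurable and } \mathcal{S}\text{-symmetric}\}$. For a cardinal $r$,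 $\mathrm{ms}_r(\mathbf{X})=\inf_{\chi}\sup_{i\in r}\mathrm{ms}(\chi^{-1}(i))$, the infimum over all measurable colorings $\chi:X\to r$ (i.e. each $\chi^{-1}(i)$ is measurable). *)

(* Defs.v *)
Definition subset {X : Type} (A B : X -> Prop) : Prop := forall x, A x -> B x.
Definition preimage {X Y : Type} (f : X -> Y) (B : Y -> Prop) : X -> Prop :=
  fun x => B (f x).
Definition image {X Y : Type} (f : X -> Y) (A : X -> Prop) : Y -> Prop :=
  fun y => exists x, A x /\ f x = y.

Record complete_chain := CompleteChain {
  cc_car :> Type;
  cc_le : cc_car -> cc_car -> Prop;
  cc_le_refl : forall x, cc_le x x;
  cc_le_trans : forall x y z, cc_le x y -> cc_le y z -> cc_le x z;
  cc_le_antisym : forall x y, cc_le x y -> cc_le y x -> x = y;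
  cc_le_total : forall x y, cc_le x y \/ cc_le y x;
  cc_sup : (cc_car -> Prop) -> cc_car;
  cc_sup_ub : forall S x, S x -> cc_le x (cc_sup S);
  cc_sup_least : forall S b, (forall x, S x -> cc_le x b) -> cc_le (cc_sup S) b;
  cc_inf : (cc_car -> Prop) -> cc_car;
  cc_inf_lb : forall S x, S x -> cc_le (cc_inf S) x;
  cc_inf_greatest : forall S b, (forall x, S x -> cc_le b x) -> cc_le b (cc_inf S)
}.
Arguments cc_le {c}.
Arguments cc_sup {c}.
Arguments cc_inf {c}.

Definition is_sigma_algebra {X : Type} (M : (X -> Prop) -> Prop) : Prop :=
  M (fun _ => False) /\
  (forall A, M A -> M (fun x => ~ A x)) /\
  (forall F : nat -> X -> Prop, (forall n, M (F n)) -> M (fun x => exists n, F n x)).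

(** A measure on X with values in L: a monotone function on a sigma-algebra
    (the codomain [mu(empty), mu(X)] is automatic from monotonicity).
    The function is total on subsets, but only its values on measurable
    sets are ever used. *)
Record cmeasure (X : Type) (L : complete_chain) := CMeasure {
  mdom : (X -> Prop) -> Prop;
  mdom_sigma : is_sigma_algebra mdom;
  mu : (X -> Prop) -> L;
  mu_mono : forall A B, mdom A -> mdom B -> subset A B -> cc_le (mu A) (mu B)
}.
Arguments mdom {X L}.
Arguments mu {X L}.

Record symspace (X : Type) (L : complete_chain) := SymSpace {
  smeas : cmeasure X L;
  syms : (X -> X) -> Prop;
  syms_inv : forall s, syms s ->
    exists t, syms t /\ (forall x, t (s x) = x) /\ (forall y, s (t y) = y);
  syms_pres : forall s A, syms s -> mdom smeas A ->
    mdom smeas (image s A) /\ mu smeas (image s A) = mu smeas A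
}.
Arguments smeas {X L}.
Arguments syms {X L}.

Definition symmetric {X L} (XX : symspace X L) (A : X -> Prop) : Prop :=
  exists s, syms XX s /\ (forall x, image s A x <-> A x).

Definition ms {X L} (XX : symspace X L) (A : X -> Prop) : L :=
  cc_sup (fun v => exists B, mdom (smeas XX) B /\ subset B A /\
                             symmetric XX B /\ v = mu (smeas XX) B).

(** ms_r(X) = inf over measurable colorings chi : X -> r of
    sup_{i in r} ms(chi^{-1}(i)); the cardinal r is represented by a type. *)
Definition ms_r {X L} (XX : symspace X L) (r : Type) : L :=
  cc_inf (fun v => exists chi : X -> r,
     (forall i, mdom (smeas XX) (preimage chi (fun j => j = i))) /\
     v = cc_sup (fun w => exists i, w = ms XX (preimage chi (fun j => j = i)))).

(* Main.v *)
Require Import Defs.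
From Stdlib Require Import Classical FunctionalExtensionality PropExtensionality.

Section Aux.
Context {X : Type} (M : (X -> Prop) -> Prop) (HM : is_sigma_algebra M).

Lemma M_ext A B : M A -> (forall x, A x <-> B x) -> M B.
Proof.
  intros HA H. assert (A = B) as <-; [|exact HA].
  apply functional_extensionality; intro x; apply propositional_extensionality; apply H.
Qed.

Lemma M_inter_count (F : nat -> X -> Prop) : (forall n, M (F n)) -> M (fun x => forall n, F n x).
Proof.
  destruct HM as [H0 [HC HU]]. intros HF.
  apply M_ext with (fun x => ~ (exists n, ~ F n x)).
  - apply HC, HU. intro n. apply HC, HF.
  - intro x; split.
    + intros H n. apply NNPP. intro Hn. apply H. exists n. exact Hn.
    + intros H [n Hn]. apply Hn, H.
Qed.

Lemma M_inter2 A B : M A -> M B -> M (fun x => A x /\ B x).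
Proof.
  intros HA HB.
  apply M_ext with (fun x => forall n, (match n with 0 => A | _ => B end) x).
  - apply M_inter_count. intros [|n]; assumption.
  - intro x; split.
    + intro H; split; [apply (H 0) | apply (H 1)].
    + intros [H1 H2] [|n]; assumption.
Qed.
End Aux.

Section Hull.
Context {Y : Type} (s t : Y -> Y) (A : Y -> Prop).
Fixpoint Pit (u : Y -> Y) (n : nat) : Y -> Prop :=
  match n with 0 => A | S m => fun y => Pit u m (u y) end.
Definition Hl : Y -> Prop := fun y => forall n, Pit s n y /\ Pit t n y.

Lemma Hl_step (ts : forall y, t (s y) = y) : forall y, Hl y -> Hl (s y).
Proof.
  intros y H n. split.
  - exact (proj1 (H (S n))).
  - destruct n as [|m].
    + exact (proj1 (H 1)).
    + simpl. rewrite ts. exact (proj2 (H m)).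
Qed.
End Hull.

Lemma Hl_swap {Y} (s t : Y -> Y) A y : Hl s t A y -> Hl t s A y.
Proof. intros H n. destruct (H n); split; assumption. Qed.

Theorem proposition3p1 (L : complete_chain) (X Y : Type)
  (XX : symspace X L) (YY : symspace Y L) (f : X -> Y)
  (Hmeas : forall B, mdom (smeas YY) B ->
     mdom (smeas XX) (preimage f B) /\
     cc_le (mu (smeas XX) (preimage f B)) (mu (smeas YY) B))
  (Hsym : forall sX, syms XX sX ->
     exists sY, syms YY sY /\ (forall x, sY (f x) = f (sX x))) :
  forall r : Type, cc_le (ms_r XX r) (ms_r YY r).
Proof.
  intro r.
  assert (Key : forall A, mdom (smeas YY) A ->
            cc_le (ms XX (preimage f A)) (ms YY A)).
  { intros A HA. unfold ms. apply cc_sup_least.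
    intros v [B [HB [HBs [[sX [HsX Hinv]] ->]]]].
    destruct (Hsym sX HsX) as [s [Hs Hcomm]].
    destruct (syms_inv _ _ YY s Hs) as [t [Ht [ts st]]].
    set (C := Hl s t A).
    assert (HMY := mdom_sigma _ _ (smeas YY)).
    assert (Pm : forall u w, syms YY w -> (forall y, w (u y) = y) -> (forall y, u (w y) = y) ->
              forall n, mdom (smeas YY) (Pit A u n)).
    { intros u w Hw wu uw n; induction n as [|n IH]; [exact HA|].
      apply M_ext with (image w (Pit A u n)).
      - exact (proj1 (syms_pres _ _ YY w _ Hw IH)).
      - intro y; split.
        + intros [x [Hx <-]]. simpl. rewrite uw. exact Hx.
        + intro Hy. exists (u y). split; [exact Hy| apply wu]. }
    assert (HC : mdom (smeas YY) C).
    { unfold C, Hl. apply (M_inter_count _ HMY). intro n. apply M_inter2; [exact HMY| |].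
      - apply (Pm s t Ht ts st).
      - apply (Pm t s Hs st ts). }
    assert (Bsub : forall b, B b -> C (f b)).
    { assert (Fs : forall n b, B b -> Pit A s n (f b)).
      { induction n as [|n IH]; intros b Hb.
        - exact (HBs b Hb).
        - simpl. rewrite Hcomm. apply IH. apply Hinv. exists b; split; auto. }
      assert (Ft : forall n b, B b -> Pit A t n (f b)).
      { induction n as [|n IH]; intros b Hb.
        - exact (HBs b Hb).
        - simpl. apply Hinv in Hb. destruct Hb as [b' [Hb' <-]].
          rewrite <- Hcomm, ts. apply IH, Hb'. }
      intros b Hb n; split; auto. }
    destruct (Hmeas C HC) as [HfC HleC].
    apply cc_le_trans with (mu (smeas XX) (preimage f C)).
    { apply mu_mono; auto. }
    apply cc_le_trans with (mu (smeas YY) C); [exact HleC|].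
    apply cc_sup_ub. exists C. split; [exact HC|]. split.
    { intros y Hy. exact (proj1 (Hy 0)). }
    split; [|reflexivity].
    exists s. split; [exact Hs|]. intro y; split.
    - intros [x [Hx <-]]. apply Hl_step; auto.
    - intro Hy. exists (t y). split; [|apply st].
      apply Hl_swap. apply Hl_step; auto. apply Hl_swap; exact Hy. }
  unfold ms_r. apply cc_inf_greatest.
  intros v [chi [Hchi ->]].
  apply cc_le_trans with
    (cc_sup (fun w => exists i, w = ms XX (preimage (fun x => chi (f x)) (fun j => j = i)))).
  - apply cc_inf_lb. exists (fun x => chi (f x)). split; [|reflexivity].
    intro i. exact (proj1 (Hmeas _ (Hchi i))).
  - apply cc_sup_least. intros w [i ->].
    apply cc_le_trans with (ms YY (preimage chi (fun j => j = i))).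
    + apply (Key _ (Hchi i)).
    + apply cc_sup_ub. exists i. reflexivity.
Qed.
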